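(* Let $S$ be a semigroup which is categorical at zero, $0$-left cancellative, right reductive, has right local units and admits least common multiples. Then the nonzero elements of the inverse hull $\mathcal H(S)$ are precisely the elements $\theta_s\theta_t^{-1}$ with $s,t\in S\setminus\{0\}$ and $s^+=t^+$. Moreover, if $s_1,t_1,s_2,t_2\in S\setminus\{0\}$ with $s_1^+=t_1^+$ and $s_2^+=t_2^+$, then $\theta_{s_1}\theta_{t_1}^{-1}=\theta_{s_2}\theta_{t_2}^{-1}$ if and only if there exist $x,y\in S$ with $xy=s_1^+$, $yx=s_2^+$, $s_1x=s_2$, $t_1x=t_2$, $s_2y=s_1$ and $t_2y=t_1$.
   Context: $S$ has zero $0$, $S'=S\setminus\{0\}$. Categorical at zero: $rs\neq0$ and $st\neq0$ imply $rst\neq0$. $0$-left cancellative: $st=sr\neq0\Rightarrow t=r$. Right reductive: $sx=tx$ for all $x$ implies $s=t$. Right local units: each $s$ has an idempotent $e$ with $se=s$; under these hypotheses each nonzero $s$ has a unique idempotent $s^+$ with $ss^+=s$. Least common multiples: with $\tilde S=S\cup\{1\}$, $s\mid t$ iff $t\in s\tilde S$; $r$ is an lcm of $s,t$ if $sS\cap tS=rS$, $s\mid r$, $t\mid r$; every pair has one. $\theta_s:\{x\in S':sx\neq0\}\to sS\setminus\{0\}$, $x\mapsto sx$; $\mathcal H(S)$ is the inverse semigroup of partial bijections of $S'$ generated by all $\theta_s$ (its zero is the empty map). *)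

(* Defs.v *)
From Stdlib Require Import Classical ClassicalEpsilon FunctionalExtensionality PropExtensionality.

Section SG.
Variables (S : Type) (mul : S -> S -> S) (z : S).

Definition semigroup_with_zero : Prop :=
  (forall a b c, mul a (mul b c) = mul (mul a b) c) /\
  (forall a, mul z a = z) /\ (forall a, mul a z = z).

Definition categorical_at_zero : Prop :=
  forall r s t, mul r s <> z -> mul s t <> z -> mul (mul r s) t <> z.

Definition zero_left_cancellative : Prop :=
  forall s t r, mul s t = mul s r -> mul s t <> z -> t = r.

Definition right_reductive : Prop :=
  forall s t, (forall x, mul s x = mul t x) -> s = t.

Definition right_local_units : Prop :=
  forall s, exists e, mul e e = e /\ mul s e = s.

(* s | t in S~ = S ∪ {1}, i.e. t ∈ s S~ *)
Definition sdivides (s t : S) : Prop := t = s \/ exists u, t = mul s u.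

Definition is_lcm (s t r : S) : Prop :=
  (forall w, ((exists a, w = mul s a) /\ (exists b, w = mul t b)) <->
             (exists c, w = mul r c)) /\ sdivides s r /\ sdivides t r.

Definition has_lcms : Prop := forall s t, exists r, is_lcm s t r.

(* s^+ : the (unique, under the standing hypotheses) idempotent e with s e = s *)
Definition splus (s : S) : S :=
  epsilon (inhabits z) (fun e => mul e e = e /\ mul s e = s).

(* Partial bijections of S' represented by their graphs. *)
Definition pmap := S -> S -> Prop.

Definition theta (s : S) : pmap :=
  fun x y => x <> z /\ mul s x <> z /\ y = mul s x.

(* composition f g = "first g, then f" (functions act on the left) *)
Definition pcomp (f g : pmap) : pmap := fun x y => exists w, g x w /\ f w y.
Definition pinv (f : pmap) : pmap := fun x y => f y x.
Definition pempty : pmap := fun _ _ => False.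

Inductive hull : pmap -> Prop :=
| hull_gen : forall s, hull (theta s)
| hull_comp : forall f g, hull f -> hull g -> hull (pcomp f g)
| hull_inv : forall f, hull f -> hull (pinv f).

End SG.

(* Main.v *)
Require Import Defs.
From Stdlib Require Import Classical ClassicalEpsilon FunctionalExtensionality PropExtensionality.

Lemma rel_ext (S : Type) (f g : pmap S) : (forall x y, f x y <-> g x y) -> f = g.
Proof.
  intro H. apply functional_extensionality; intro x.
  apply functional_extensionality; intro y. apply propositional_extensionality. apply H.
Qed.

Theorem theorem7p22 (S : Type) (mul : S -> S -> S) (z : S)
  (Hsg : semigroup_with_zero S mul z)
  (Hcat : categorical_at_zero S mul z)
  (Hcanc : zero_left_cancellative S mul z)
  (Hred : right_reductive S mul)
  (Hunits : right_local_units S mul)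
  (Hlcm : has_lcms S mul) :
  (forall f, hull S mul z f -> f <> pempty S ->
     exists s t, s <> z /\ t <> z /\ splus S mul z s = splus S mul z t /\
       f = pcomp S (theta S mul z s) (pinv S (theta S mul z t))) /\
  (forall s t, s <> z -> t <> z -> splus S mul z s = splus S mul z t ->
     hull S mul z (pcomp S (theta S mul z s) (pinv S (theta S mul z t))) /\
     pcomp S (theta S mul z s) (pinv S (theta S mul z t)) <> pempty S) /\
  (forall s1 t1 s2 t2, s1 <> z -> t1 <> z -> s2 <> z -> t2 <> z ->
     splus S mul z s1 = splus S mul z t1 -> splus S mul z s2 = splus S mul z t2 ->
     (pcomp S (theta S mul z s1) (pinv S (theta S mul z t1)) =
      pcomp S (theta S mul z s2) (pinv S (theta S mul z t2)) <->
      exists x y, mul x y = splus S mul z s1 /\ mul y x = splus S mul z s2 /\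
        mul s1 x = s2 /\ mul t1 x = t2 /\ mul s2 y = s1 /\ mul t2 y = t1)).
Proof.
  destruct Hsg as [Hass [Hz0 H0z]].
  assert (Hsp : forall s, mul (splus S mul z s) (splus S mul z s) = splus S mul z s
                          /\ mul s (splus S mul z s) = s).
  { intro s. unfold splus. apply epsilon_spec. apply Hunits. }
  assert (Huniq : forall s e, s <> z -> mul e e = e -> mul s e = s -> splus S mul z s = e).
  { intros s e Hs He Hse. apply (Hcanc s). rewrite Hse. apply Hsp. rewrite (proj2 (Hsp s)). auto. }
  assert (Hnzr : forall a b, mul a b <> z -> b <> z).
  { intros a b H Hb. subst. apply H. auto. }
  assert (Hnzl : forall a b, mul a b <> z -> a <> z).
  { intros a b H Ha. subst. apply H. auto. }
  assert (Hfix : forall s y, mul s y <> z -> mul (splus S mul z s) y = y).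
  { intros s y H. apply (Hcanc s).
    rewrite Hass, (proj2 (Hsp s)); auto. rewrite Hass, (proj2 (Hsp s)); auto. }
  assert (Hlcm' : forall a b, exists r, (forall w, ((exists c, w = mul a c) /\ (exists d, w = mul b d))
                                        <-> (exists c, w = mul r c))
                  /\ (exists c, r = mul a c) /\ (exists d, r = mul b d)).
  { intros a b. destruct (Hlcm a b) as [r [Hr _]]. exists r. split; [exact Hr|].
    apply Hr. exists (splus S mul z r). symmetry. apply Hsp. }
  set (T := theta S mul z). set (E := fun p q => pcomp S (T p) (pinv S (T q))).
  assert (NF : forall f, hull S mul z f -> exists p q, f = E p q).
  { intros f Hf. induction Hf as [s | f g _ [p [q ->]] _ [u [v ->]] | f _ [p [q ->]]].
    - exists s, (splus S mul z s). apply rel_ext. intros x y.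
      unfold E, T, pcomp, pinv, theta. split.
      + intros [Hx [Hsx ->]]. exists x. rewrite (Hfix s x Hsx).
        repeat split; auto; rewrite ?(Hfix s x Hsx); auto.
      + intros [w [[Hw [Hew ->]] [_ [Hsw ->]]]].
        rewrite Hass, (proj2 (Hsp s)). auto.
    - destruct (Hlcm' q u) as [r [Hr [[a Ha] [b Hb]]]].
      destruct (classic (r = z)) as [Hr0 | Hr0].
      + exists z, z. apply rel_ext. intros X Y. unfold E, T, pcomp, pinv, theta. split.
        * intros [w [[x [[Hx [Hvx HX]] [_ [Hux Hw]]]] [y [[Hy [Hqy Hw']] _]]]].
          exfalso. assert (Hm : exists c, w = mul r c).
          { apply Hr. split; eauto. }
          destruct Hm as [c Hc]. apply Hux. rewrite <- Hw, Hc, Hr0. auto.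
        * intros [w [[_ [H _]] _]]. exfalso. apply H. auto.
      + exists (mul p a), (mul v b). apply rel_ext. intros X Y. unfold E, T, pcomp, pinv, theta. split.
        * intros [w [[x [[Hx [Hvx HX]] [_ [Hux Hw]]]] [y [[Hy [Hqy Hw']] [_ [Hpy HY]]]]]].
          assert (Hm : exists c, w = mul r c).
          { apply Hr. split; eauto. }
          destruct Hm as [c Hc].
          assert (Hxb : x = mul b c).
          { apply (Hcanc u). rewrite Hass, <- Hb, <- Hc. auto. auto. }
          assert (Hya : y = mul a c).
          { apply (Hcanc q). rewrite Hass, <- Ha, <- Hc. auto. auto. }
          subst x y. exists c. rewrite <- !Hass. repeat split; auto.
          all: try (apply (Hnzr b c); assumption).
        * intros [c [[Hc [Hvbc HX]] [_ [Hpac HY]]]]. rewrite <- Hass in Hvbc, Hpac.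
          assert (Hbc : mul b c <> z) by eauto.
          assert (Hubc : mul u (mul b c) <> z).
          { rewrite Hass, <- Hb. rewrite Hb. apply Hcat; auto. rewrite <- Hb; auto. }
          exists (mul u (mul b c)). split.
          -- exists (mul b c). repeat split; auto. rewrite HX, Hass; auto.
          -- exists (mul a c). repeat split; eauto.
             ++ rewrite Hass, <- Ha, Hb, <- Hass. auto.
             ++ rewrite !Hass, <- Ha, <- Hb. reflexivity.
             ++ rewrite HY, Hass. reflexivity.
    - exists q, p. apply rel_ext. intros X Y. unfold E, T, pcomp, pinv, theta. split.
      + intros [w [H1 H2]]. eauto.
      + intros [w [H1 H2]]. eauto. }
  assert (Hsplus_r : forall p r, mul p r <> z -> splus S mul z (mul p r) = splus S mul z r).
  { intros p r H. apply Huniq; auto. apply Hsp. rewrite <- Hass, (proj2 (Hsp r)). auto. }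
  split; [| split].
  - intros f Hf Hne. destruct (NF f Hf) as [p [q ->]].
    destruct (classic (exists X Y, E p q X Y)) as [[X [Y HXY]] | Hno].
    2:{ exfalso. apply Hne. apply rel_ext. intros X Y. split; [intro H; apply Hno; eauto | intros []]. }
    destruct HXY as [x [[Hx [Hqx HX]] [_ [Hpx HY]]]].
    destruct (Hlcm' (splus S mul z p) (splus S mul z q)) as [r [Hr _]].
    assert (Hin : forall x, mul p x <> z -> mul q x <> z -> exists c, x = mul r c).
    { intros y H1 H2. apply Hr. split.
      - exists y. symmetry. apply Hfix; auto.
      - exists y. symmetry. apply Hfix; auto. }
    destruct (Hin x Hpx Hqx) as [c0 Hc0].
    assert (Hpr : mul p r <> z). { intro H. apply Hpx. rewrite Hc0, Hass, H. auto. }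
    assert (Hqr : mul q r <> z). { intro H. apply Hqx. rewrite Hc0, Hass, H. auto. }
    exists (mul p r), (mul q r). repeat split; auto.
    + rewrite !Hsplus_r; auto.
    + apply rel_ext. intros X' Y'. unfold E, T, pcomp, pinv, theta. split.
      * intros [w [[Hw [Hqw HX']] [_ [Hpw HY']]]].
        destruct (Hin w Hpw Hqw) as [c Hc]. subst w.
        exists c. rewrite <- !Hass. repeat split; eauto.
      * intros [c [[Hc [Hqrc HX']] [_ [Hprc HY']]]].
        exists (mul r c). rewrite !Hass. repeat split; eauto.
        all: apply (Hnzr q); rewrite Hass; assumption.
  - intros s t Hs Ht Hst. split.
    + apply hull_comp; [apply hull_gen | apply hull_inv; apply hull_gen].
    + intro H. assert (Hm : E s t t s).
      { exists (splus S mul z s). unfold T, theta, pinv.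
        assert (Hnz : splus S mul z s <> z).
        { intro H0. apply Hs. rewrite <- (proj2 (Hsp s)), H0. auto. }
        rewrite (proj2 (Hsp s)), Hst, (proj2 (Hsp t)). repeat split; auto.
        rewrite <- Hst; auto. rewrite <- Hst; auto. }
      change (E s t = pempty S) in H. rewrite H in Hm. exact Hm.
  - intros s1 t1 s2 t2 Hs1 Ht1 Hs2 Ht2 H1 H2. split.
    + intro Heq. change (E s1 t1 = E s2 t2) in Heq.
      assert (Hp : forall s, s <> z -> splus S mul z s <> z).
      { intros s Hs H0. apply Hs. rewrite <- (proj2 (Hsp s)), H0. auto. }
      assert (A1 : E s1 t1 t1 s1).
      { exists (splus S mul z s1). unfold T, theta, pinv.
        assert (Ht : mul t1 (splus S mul z s1) = t1) by (rewrite H1; apply Hsp).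
        rewrite (proj2 (Hsp s1)), Ht. repeat split; auto. }
      assert (A2 : E s2 t2 t2 s2).
      { exists (splus S mul z s2). unfold T, theta, pinv.
        assert (Ht : mul t2 (splus S mul z s2) = t2) by (rewrite H2; apply Hsp).
        rewrite (proj2 (Hsp s2)), Ht. repeat split; auto. }
      rewrite Heq in A1. rewrite <- Heq in A2.
      destruct A1 as [y [[Hy [Ht2y E1]] [_ [Hs2y E2]]]].
      destruct A2 as [x [[Hx [Ht1x F1]] [_ [Hs1x F2]]]].
      exists x, y. repeat split; auto.
      * apply (Hcanc s1). rewrite Hass, <- F2, <- E2. symmetry. apply Hsp.
        rewrite Hass, <- F2, <- E2. auto.
      * apply (Hcanc s2). rewrite Hass, <- E2, <- F2. symmetry. apply Hsp.
        rewrite Hass, <- E2, <- F2. auto.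
    + intros [x [y [_ [_ [Hs1x [Ht1x [Hs2y Ht2y]]]]]]].
      apply rel_ext. intros X Y. unfold T, pcomp, pinv, theta. split.
      * intros [w [[Hw [Ht1w HX]] [_ [Hs1w HY]]]].
        exists (mul y w). rewrite !Hass, Hs2y, Ht2y. repeat split; eauto.
        all: apply (Hnzr t2); rewrite Hass, Ht2y; auto.
      * intros [w [[Hw [Ht2w HX]] [_ [Hs2w HY]]]].
        exists (mul x w). rewrite !Hass, Hs1x, Ht1x. repeat split; eauto.
        all: apply (Hnzr t1); rewrite Hass, Ht1x; auto.
Qed.
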